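(* Let $k\ge 2$, let $n_1,\dots,n_k\ge 3$, and let $t\ge 1$ be an integer with $t\le (n_i-1)(n_{i+1}-1)$ for all $1\le i\le k-1$. Then every graph $H$ in the family $GS_t(K_{n_1},\dots,K_{n_k})$ satisfies $$D(H,x)=\prod_{i=1}^k\big((1+x)^{n_i}-1\big);$$ in particular all graphs in this family have the same domination polynomial.
   Context: All graphs are finite and simple. For a graph $G$, a set $S\subseteq V(G)$ is dominating if every vertex of $V(G)\setminus S$ is adjacent to some vertex of $S$. Let $d(G,i)$ be the number of dominating sets of $G$ of cardinality $i$; the domination polynomial is $D(G,x)=\sum_{i=1}^{|V(G)|} d(G,i)x^i$. The family $GS_t(K_{n_1},\dots,K_{n_k})$: take vertex-disjoint complete graphs $K_{n_1},\dots,K_{n_k}$, where the vertices of $K_{n_i}$ are labelled $w^{(i)}_1,\dots,w^{(i)}_{n_i}$. For each $1\le i\le k-1$, add a set of exactly $t$ edges between $K_{n_i}$ and $K_{n_{i+1}}$, each of the form $w^{(i)}_a w^{(i+1)}_b$ with $1\le a\le n_i-1$ and $1\le b\le n_{i+1}-1$ (so the vertex $w^{(i)}_{n_i}$ of each clique receives no edges outside its clique). No other edges are added. Every graph arising from some choice of these edge sets belongs to $GS_t(K_{n_1},\dots,K_{n_k})$. *)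

(* Defs.v *)
From HB Require Import structures.
From mathcomp Require Import all_boot all_order all_algebra.
Set Implicit Arguments. Unset Strict Implicit. Unset Printing Implicit Defensive.
Import GRing.Theory.
Local Open Scope ring_scope.

Definition dominating (T : finType) (adj : rel T) (S : {set T}) : bool :=
  [forall v : T, (v \in S) || [exists u in S, adj u v]].

Definition dom_count (T : finType) (adj : rel T) (i : nat) : nat :=
  #|[set S : {set T} | dominating adj S && (#|S| == i)%N]|.

Definition dom_poly (T : finType) (adj : rel T) : {poly int} :=
  \sum_(1 <= i < #|T|.+1) (dom_count adj i)%:R * 'X^i.

(* Vertices of GS_t(K_{n_0},...,K_{n_{k-1}}): vertex (i, a) is w^{(i+1)}_{a+1}
   (0-indexed cliques and labels). *)
Definition GSvert (k : nat) (n : nat -> nat) : finType := {i : 'I_k & 'I_(n i)}.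

(* E i : the set of edges between clique i and clique i+1, as pairs (a, b)
   meaning the edge w^{(i)}_a w^{(i+1)}_b. *)
Definition GSadj (k : nat) (n : nat -> nat)
    (E : forall i : nat, {set 'I_(n i) * 'I_(n i.+1)}) : rel (GSvert k n) :=
  fun u v =>
    [|| (tag u == tag v) && (val (tagged u) != val (tagged v)),
        ((val (tag v) == (val (tag u)).+1) &&
         [exists p in E (val (tag u)),
            (val p.1 == val (tagged u)) && (val p.2 == val (tagged v))])
      | ((val (tag u) == (val (tag v)).+1) &&
         [exists p in E (val (tag v)),
            (val p.1 == val (tagged v)) && (val p.2 == val (tagged u))])].

Definition GSvalid (k : nat) (n : nat -> nat) (t : nat)
    (E : forall i : nat, {set 'I_(n i) * 'I_(n i.+1)}) : Prop :=
  forall i : nat, (i.+1 < k)%N ->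
    #|E i| = t /\
    (forall p, p \in E i -> ((val p.1).+1 < n i)%N /\ ((val p.2).+1 < n i.+1)%N).

(* Main.v *)
Require Import Defs.
From HB Require Import structures.
From mathcomp Require Import all_boot all_order all_algebra.
Set Implicit Arguments. Unset Strict Implicit. Unset Printing Implicit Defensive.
Import GRing.Theory.
Local Open Scope ring_scope.

Lemma sub_pow (R : comPzRingType) (T : finType) (C : {set T}) (x : R) :
  \sum_(A : {set T} | A \subset C) x ^+ #|A| = (x + 1) ^+ #|C|.
Proof.
have -> : (x + 1) ^+ #|C| = \prod_(i : T) ((i \in C)%:R * x + 1).
  rewrite -prodr_const [RHS](bigID (mem C)) /= [X in _ * X]big1 ?mulr1.
    by apply: eq_bigr => i ->; rewrite mul1r.
  by move=> i /negbTE ->; rewrite mul0r add0r.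
rewrite bigA_distr big_mkcond /=; apply: eq_bigr => A _.
rewrite -big_mkcond /=.
case: (boolP (A \subset C)) => sAC.
  rewrite -prodr_const; apply: eq_bigr => i iA.
  by rewrite (subsetP sAC _ iA) mul1r.
have [i iA iC] : exists2 i, i \in A & i \notin C.
  by move/subsetPn: sAC => [i ? ?]; exists i.
by rewrite (bigD1 i) //= (negbTE iC) mul0r mul0r.
Qed.

Lemma part_sum (R : comPzRingType) (T : finType) (k : nat) (c : T -> 'I_k) (x : R) :
  \sum_(S : {set T} | [forall i : 'I_k, S :&: [set y | c y == i] != set0]) x ^+ #|S|
  = \prod_(i < k) ((x + 1) ^+ #|[set y | c y == i]| - 1).
Proof.
set C := fun i : 'I_k => [set y | c y == i].
have -> : \prod_(i < k) ((x + 1) ^+ #|C i| - 1) =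
   \prod_(i < k) \sum_(A : {set T} | (A \subset C i) && (A != set0)) x ^+ #|A|.
  apply: eq_bigr => i _; rewrite -sub_pow (bigD1 set0) ?sub0set //= cards0 expr0.
  by rewrite addrC addrK.
rewrite bigA_distr_big_dep /=.
pose h := fun S : {set T} => [ffun i => S :&: C i].
pose h' := fun f : {ffun 'I_k -> {set T}} => \bigcup_(i < k) f i.
have hcup S : h' (h S) = S.
  apply/setP => y; apply/bigcupP/idP => [[i _]|yS].
    by rewrite ffunE inE => /andP[].
  by exists (c y) => //; rewrite ffunE !inE yS eqxx.
rewrite (reindex h) /=; last first.
  exists h' => [S _|f]; first by rewrite hcup.
  rewrite inE => /familyP fP; apply/ffunP => i; rewrite ffunE.
  apply/setP => y; rewrite inE; apply/andP/idP => [[/bigcupP [j _ yj] yc]|yf].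
    have /andP[/subsetP sj _] := fP j.
    have := sj _ yj; rewrite inE => /eqP cj.
    by move: yc; rewrite /C inE cj => /eqP <-.
  have /andP[/subsetP si _] := fP i.
  split; last exact: si.
  by apply/bigcupP; exists i.
apply: eq_big => [S|S _].
  apply/forallP/familyP => H i.
    by rewrite ffunE unfold_in /= subsetIr H.
  by have := H i; rewrite ffunE unfold_in => /andP[].
rewrite prodrXr; congr (x ^+ _).
rewrite -sum1_card (partition_big c xpredT) //=.
apply: eq_bigr => i _; rewrite ffunE -sum1_card.
by apply: eq_bigl => y; rewrite !inE.
Qed.
Lemma dom_poly_sum (T : finType) (adj : rel T) (t0 : T) :
  dom_poly adj = \sum_(S | dominating adj S) 'X^#|S|.
Proof.
have inner S : dominating adj S ->
    \sum_(1 <= i < #|T|.+1) (((#|S| == i)%N)%:R * 'X^i : {poly int}) = 'X^#|S|.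
  move=> dS.
  have S0 : (0 < #|S|)%N.
    rewrite card_gt0; apply/set0Pn.
    move/forallP: dS => /(_ t0) /orP[h|/existsP[u /andP[uS _]]]; by eauto.
  rewrite (bigD1_seq #|S|) /=; last by rewrite /index_iota iota_uniq.
    rewrite eqxx mul1r big1 ?addr0 // => i /negbTE; rewrite eq_sym => ->.
    by rewrite mul0r.
  by rewrite mem_index_iota S0 ltnS max_card.
rewrite [RHS](eq_bigr _ (fun S dS => esym (inner S dS))) exchange_big /=.
apply: eq_bigr => i _; rewrite -mulr_suml; congr (_ * _).
transitivity (\sum_(S | dominating adj S) (if (#|S| == i)%N then 1 else 0 : {poly int})); last by apply: eq_bigr => S _; case: eqP.
rewrite -big_mkcondr /= sumr_const /dom_count.
by congr (_%:R); apply: eq_card => S; rewrite !inE.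
Qed.

Lemma card_clique (k : nat) (n : nat -> nat) (i : 'I_k) :
  #|[set y : GSvert k n | tag y == i]| = n i.
Proof.
have -> : [set y : GSvert k n | tag y == i] =
          [set Tagged (fun j : 'I_k => 'I_(n j)) a | a : 'I_(n i)].
  apply/setP => y; rewrite inE; apply/eqP/imsetP => [|[a _ ->]] //.
  by case: y => j a /= e; subst j; exists a.
rewrite card_imset ?card_ord //; exact: eq_from_Tagged.
Qed.

Lemma dchar (k : nat) (n : nat -> nat) (t : nat)
    (hn : forall i : nat, (i < k)%N -> (3 <= n i)%N)
    (E : forall i : nat, {set 'I_(n i) * 'I_(n i.+1)})
    (hE : @GSvalid k n t E) (S : {set GSvert k n}) :
  dominating (@GSadj k n E) S =
  [forall i : 'I_k, S :&: [set y | tag y == i] != set0].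
Proof.
apply/forallP/forallP => H i.
  have ni : ((n i).-1 < n i)%N by have := hn _ (ltn_ord i); case: (n i).
  pose v := Tagged (fun j : 'I_k => 'I_(n j)) (Ordinal ni).
  apply/set0Pn.
  case/orP: (H v) => [vS|/existsP [u /andP [uS]]].
    by exists v; rewrite !inE vS /=.
  rewrite /GSadj /= => /or3P [/andP [/eqP tu _]|/andP [/eqP e /existsP [p /andP [pE /andP [_ /eqP p2]]]]|/andP [/eqP e /existsP [p /andP [pE /andP [/eqP p1 _]]]]].
  - by exists u; rewrite !inE uS tu eqxx.
  - have lt : ((val (tag u)).+1 < k)%N by rewrite -e ltn_ord.
    have [_ /(_ _ pE) [_]] := hE _ lt.
    move=> lt2; have : ((n i).-1.+1 < n i)%N by rewrite -p2 e; exact: lt2.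
    by rewrite prednK ?ltnn // (leq_trans _ (hn _ (ltn_ord i))).
  - have lt : ((val i).+1 < k)%N by rewrite -e ltn_ord.
    have [_ /(_ _ pE) [+ _]] := hE _ lt.
    move=> lt1; have : ((n i).-1.+1 < n i)%N by rewrite -p1; exact: lt1.
    by rewrite prednK ?ltnn // (leq_trans _ (hn _ (ltn_ord i))).
apply/orP; case: (boolP (i \in S)) => iS; [by left|right].
have /set0Pn [u] := H (tag i); rewrite !inE => /andP [uS tu].
apply/existsP; exists u; rewrite uS /GSadj tu /=.
apply/orP; left; apply/eqP => e.
move: iS tu e uS; case: u => iu au; case: i => iv av /= iS /eqP tu.
subst iu => /val_inj -> uS.
by rewrite uS in iS.
Qed.

Theorem mainTheorem8 (k : nat) (n : nat -> nat) (t : nat)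
    (hk : (2 <= k)%N)
    (hn : forall i : nat, (i < k)%N -> (3 <= n i)%N)
    (ht : (1 <= t)%N)
    (htn : forall i : nat, (i.+1 < k)%N -> (t <= (n i - 1) * (n i.+1 - 1))%N)
    (E : forall i : nat, {set 'I_(n i) * 'I_(n i.+1)})
    (hE : @GSvalid k n t E) :
  dom_poly (@GSadj k n E) = \prod_(i < k) (('X + 1) ^+ (n i) - 1).
Proof.
have k0 : (0 < k)%N by apply: leq_trans hk.
have n0 : (0 < n 0)%N by apply: leq_trans (hn _ k0).
pose t0 : GSvert k n := Tagged (fun j : 'I_k => 'I_(n j)) (Ordinal n0 : 'I_(n (Ordinal k0))).
rewrite (dom_poly_sum _ t0).
rewrite (eq_bigl _ _ (fun S => dchar hn hE S)) part_sum.
by apply: eq_bigr => i _; rewrite card_clique.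
Qed.
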